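(* Let $(R,\mathfrak{m})$ be a Noetherian local ring and let $I$ be an ideal of $R$. Let $x_1,\ldots,x_s,y$ be a minimal generating set of $I$ and $J=(x_1,\ldots,x_s)$. Assume that $x_1,\ldots,x_s$ is an $R$-sequence and that the initial forms $x_1^*,\ldots,x_{s-1}^*$ form a $\mathbf{G}(I)$-sequence. Then, for each $n\geq 2$, every $F\in Q_n$ satisfies $F(0,\ldots,0,1)\in (JI^{n-1}:y^n)$, and the map $F\mapsto F(0,\ldots,0,1)$ induces an isomorphism of $R$-modules $$\left[\frac{Q}{Q\langle n-1\rangle}\right]_n\cong \frac{JI^{n-1}:y^{n}}{JI^{n-2}:y^{n-1}}.$$ In particular, if $J$ is a reduction of $I$ with reduction number $r=\mathrm{r}_J(I)$, then $\mathrm{rt}(I)=\mathrm{r}_J(I)+1$ and there is a form $Y^{r+1}-\sum_{i=1}^s X_iF_i\in Q_{r+1}$, with $F_i\in V_r$, such that $Q=(Y^{r+1}-\sum_i X_iF_i)+Q\langle r\rangle$.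
   Context: $\mathbf{R}(I)=R[It]=\bigoplus_{n\geq0}I^nt^n$ is the Rees algebra and $\mathbf{G}(I)=\bigoplus_{n\geq 0}I^n/I^{n+1}$ the associated graded ring; $x_i^*$ denotes the class of $x_i$ in $I/I^2$. $V=R[X_1,\ldots,X_s,Y]$ is a polynomial ring graded by total degree in the variables, $V_n$ its degree-$n$ component, and $\varphi:V\to\mathbf{R}(I)$ is the graded $R$-algebra map with $X_i\mapsto x_it$, $Y\mapsto yt$. $Q=\ker\varphi=\bigoplus_{n\geq1}Q_n$ (the equations of $\mathbf{R}(I)$), and for $n\geq1$, $Q\langle n\rangle$ is the ideal of $V$ generated by the homogeneous elements of $Q$ of degree at most $n$; $[Q/Q\langle n-1\rangle]_n$ denotes the degree-$n$ component. Convention $I^0=R$. The relation type $\mathrm{rt}(I)$ is the least $N\geq1$ with $Q=Q\langle N\rangle$. $J\subseteq I$ is a reduction of $I$ if $I^{m+1}=JI^m$ for some $m\geq 0$, and the reduction number $\mathrm{r}_J(I)$ is the least such $m$. *)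

(* Defs.v *)
From HB Require Import structures.
From mathcomp Require Import all_boot all_order all_algebra.
From mathcomp Require Import mpoly.
Set Implicit Arguments. Unset Strict Implicit. Unset Printing Implicit Defensive.
Import Order.TTheory GRing.Theory.
Local Open Scope ring_scope.

Section Defs.
Variable R : comNzRingType.

Definition is_ideal (A : R -> Prop) : Prop :=
  A 0 /\ (forall a b, A a -> A b -> A (a + b)) /\ (forall r a, A a -> A (r * a)).

Definition ideal_gen_on k (S : {set 'I_k}) (g : 'I_k -> R) : R -> Prop :=
  fun r => exists c : 'I_k -> R,
    (forall i, i \notin S -> c i = 0) /\ r = \sum_(i < k) c i * g i.

Definition ideal_gen k (g : 'I_k -> R) : R -> Prop := ideal_gen_on setT g.

Definition same_set (A B : R -> Prop) : Prop := forall r, A r <-> B r.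

Definition idealM (A B : R -> Prop) : R -> Prop :=
  fun r => exists k (a b : 'I_k -> R),
    (forall i, A (a i)) /\ (forall i, B (b i)) /\ r = \sum_(i < k) a i * b i.

(** powers, with the convention I^0 = R *)
Definition idealX (A : R -> Prop) (n : nat) : R -> Prop :=
  iter n (idealM A) (fun _ => True).

Definition colon (A : R -> Prop) (a : R) : R -> Prop := fun r => A (r * a).

Definition noetherian : Prop :=
  forall A, is_ideal A -> exists k (g : 'I_k -> R), same_set A (ideal_gen g).

Definition maximal_ideal (M : R -> Prop) : Prop :=
  is_ideal M /\ ~ M 1 /\
  forall A, is_ideal A -> (forall r, M r -> A r) -> ~ A 1 -> same_set A M.

Definition local_ring : Prop :=
  exists M, maximal_ideal M /\ forall M', maximal_ideal M' -> same_set M' M.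

Definition minimal_generating k (g : 'I_k -> R) (I : R -> Prop) : Prop :=
  same_set I (ideal_gen g) /\
  forall S : {set 'I_k}, S \proper setT -> ~ same_set I (ideal_gen_on S g).

Definition regular_seq k (x : 'I_k -> R) : Prop :=
  (forall i : 'I_k, forall r,
     ideal_gen_on [set j : 'I_k | (j < i)%N] x (r * x i) ->
     ideal_gen_on [set j : 'I_k | (j < i)%N] x r) /\
  ~ ideal_gen x 1.

(** ---- The associated graded ring G(I) = (+)_n I^n/I^(n+1) ----
    An element is represented by a finitely supported family (g n)_n with
    g n in I^n (g n represents the degree n component in I^n/I^(n+1)). *)
Definition Gelt (I : R -> Prop) (g : nat -> R) : Prop :=
  (forall n, idealX I n (g n)) /\ exists N, forall n, (N <= n)%N -> g n = 0.

Definition Geq (I : R -> Prop) (g h : nat -> R) : Prop :=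
  forall n, idealX I n.+1 (g n - h n).

Definition Gmul (g h : nat -> R) : nat -> R :=
  fun n => \sum_(i < n.+1) g i * h (n - i)%N.

Definition Gone : nat -> R := fun n => if n == 0%N then 1 else 0.

Definition initial_form (x : R) : nat -> R := fun n => if n == 1%N then x else 0.

Definition G_in_ideal (I : R -> Prop) k (x : 'I_k -> R) (i : nat) (g : nat -> R) : Prop :=
  exists c : 'I_k -> nat -> R, (forall j, Gelt I (c j)) /\
    Geq I g (fun n => \sum_(j < k | (j < i)%N) Gmul (initial_form (x j)) (c j) n).

Definition G_regular_seq (I : R -> Prop) k (x : 'I_k -> R) (m : nat) : Prop :=
  (forall i : 'I_k, (i < m)%N -> forall g, Gelt I g ->
     G_in_ideal I x i (Gmul (initial_form (x i)) g) -> G_in_ideal I x i g) /\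
  ~ G_in_ideal I x m Gone.

Definition reduction_at (J I : R -> Prop) (m : nat) : Prop :=
  same_set (idealX I m.+1) (idealM J (idealX I m)).

Definition reduction_number (J I : R -> Prop) (r : nat) : Prop :=
  (forall a, J a -> I a) /\ reduction_at J I r /\
  forall m, (m < r)%N -> ~ reduction_at J I m.

End Defs.

(** ---- The polynomial ring V = R[X_1,...,X_s,Y] and the equations Q ----
    V = {mpoly R[s.+1]}; X_i = 'X_(lift ord_max i), Y = 'X_ord_max. *)
Section Rees.
Variables (R : comNzRingType) (s : nat).
Local Notation V := {mpoly R[s.+1]}.

Definition Xv (i : 'I_s) : V := 'X_(lift ord_max i).
Definition Yv : V := 'X_(@ord_max s).

Definition gens (x : 'I_s -> R) (y : R) : 'I_s.+1 -> R :=
  fun j => if unlift ord_max j is Some i then x i else y.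

(** phi : V -> R[It] subset R[t],  X_i |-> x_i t,  Y |-> y t *)
Definition phi (x : 'I_s -> R) (y : R) (F : V) : {poly R} :=
  mmap (@polyC R) (fun j => (gens x y j)%:P * 'X) F.

Definition inQ x y (F : V) : Prop := phi x y F = 0.

Definition inQn x y (n : nat) (F : V) : Prop := F \is n.-homog /\ inQ x y F.

Definition inQgen x y (n : nat) (F : V) : Prop :=
  exists k (G H : 'I_k -> V),
    (forall i, exists d, (d <= n)%N /\ inQn x y d (G i)) /\
    F = \sum_(i < k) H i * G i.

Definition Q_eq_gen x y (N : nat) : Prop := forall F : V, inQ x y F <-> inQgen x y N F.

Definition relation_type x y (N : nat) : Prop :=
  (1 <= N)%N /\ Q_eq_gen x y N /\ forall M, (1 <= M < N)%N -> ~ Q_eq_gen x y M.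

Definition evalY1 (F : V) : R := F.@[fun j => if j == ord_max then 1 else 0].

End Rees.

(* Main.v *)
Require Import Defs.
From HB Require Import structures.
From mathcomp Require Import all_boot all_order all_algebra.
From mathcomp Require Import mpoly.
From mathcomp Require Import zify.
Import Order.TTheory GRing.Theory.
Set Implicit Arguments. Unset Strict Implicit. Unset Printing Implicit Defensive.
Local Open Scope ring_scope.

Section Main.
Variables (R : comNzRingType) (s : nat) (x : 'I_s -> R) (y : R).
Local Notation V := {mpoly R[s.+1]}.
Local Notation g := (gens x y).
Local Notation ev1 := (@evalY1 R s).

Lemma mmap_homog n (v : 'I_s.+1 -> R) (F : V) : F \is n.-homog ->
  mmap (@polyC R) (fun j => (v j)%:P * 'X) F = (F.@[v])%:P * 'X^n.
Proof.
move=> hF; rewrite /mmap mevalE rmorph_sum mulr_suml big_seq [RHS]big_seq.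
apply: eq_bigr => m hm; have dm : mdeg m = n := dhomog_mf hF hm.
have -> : ('X^n : {poly R}) = \prod_(i < s.+1) 'X ^+ m i.
  by rewrite -(big_morph (GRing.exp ('X : {poly R})) (exprD _) (expr0 _)) -mdegE dm.
rewrite /mmap1 (eq_bigr (fun i => (v i ^+ m i)%:P * 'X ^+ m i)); last first.
  by move=> i _; rewrite exprMn rmorphXn.
rewrite big_split /= rmorphM rmorph_prod /= mulrA.
reflexivity.
Qed.


Definition ev (F : V) := F.@[g].
Definition e1 : 'I_s.+1 -> R := fun j => if j == ord_max then 1 else 0.

Lemma evalY1E (F : V) : ev1 F = F.@[e1].
Proof. by []. Qed.

Lemma gens_lift (i : 'I_s) : g (lift ord_max i) = x i.
Proof. by rewrite /gens liftK. Qed.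

Lemma gens_max : g ord_max = y.
Proof. by rewrite /gens unlift_none. Qed.

Lemma ev_X (i : 'I_s) : ev (Xv R i) = x i.
Proof. by rewrite /ev /Xv mevalXU gens_lift. Qed.

Lemma ev_Y : ev (Yv R s) = y.
Proof. by rewrite /ev /Yv mevalXU gens_max. Qed.

Lemma e1_X (i : 'I_s) : ev1 (Xv R i) = 0.
Proof. by rewrite evalY1E /Xv mevalXU /e1 eq_sym (negbTE (neq_lift _ _)). Qed.

Lemma e1_Y : ev1 (Yv R s) = 1.
Proof. by rewrite evalY1E /Yv mevalXU /e1 eqxx. Qed.

Lemma homog_X (i : 'I_s) : Xv R i \is 1.-homog.
Proof. by rewrite /Xv dhomogX /= mdeg1. Qed.

Lemma homog_Y : Yv R s \is 1.-homog.
Proof. by rewrite /Yv dhomogX /= mdeg1. Qed.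

Lemma homog_C (c : R) : c%:MP \is [in R[s.+1], 0.-homog].
Proof. by rewrite -[c%:MP]mulr1 mul_mpolyC dhomogZ // dhomog1. Qed.

Lemma sum_split (T : nmodType) (f : 'I_s.+1 -> T) :
  \sum_j f j = \sum_(i < s) f (lift ord_max i) + f ord_max.
Proof.
rewrite big_ord_recr /=; congr (_ + _); apply: eq_bigr => i _.
by congr f; apply: val_inj; rewrite /= /bump leqNgt ltn_ord.
Qed.

Lemma homog_decomp n (F : V) : F \is n.+1.-homog ->
  exists Fs : 'I_s -> V, (forall i, Fs i \is n.-homog) /\
    F = \sum_i Xv R i * Fs i + (ev1 F) *: Yv R s ^+ n.+1.
Proof.
move=> hF.
pose P (G : V) := exists Fs : 'I_s -> V, (forall i, Fs i \is n.-homog) /\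
    G = \sum_i Xv R i * Fs i + (ev1 G) *: Yv R s ^+ n.+1.
suff : P F by [].
rewrite (mpolyE F) big_seq; apply: big_ind.
- exists (fun _ => 0); split=> [i|]; first exact: dhomog0.
  by rewrite big1 ?add0r ?evalY1E ?meval0 ?scale0r // => i _; rewrite mulr0.
- move=> G1 G2 [F1 [h1 e1]] [F2 [h2 e2]]; exists (fun i => F1 i + F2 i); split.
    by move=> i; apply: dhomogD.
  rewrite evalY1E mevalD -!evalY1E scalerDl.
  under eq_bigr do rewrite mulrDr.
  rewrite big_split /= {1}e1 {1}e2; rewrite -!addrA; congr (_ + _).
  by rewrite addrCA.
move=> m hm; have dm : mdeg m = n.+1 := dhomog_mf hF hm.
suff [Fs [hFs eF]] : P 'X_[m].
  exists (fun i => F@_m *: Fs i); split=> [i|]; first exact: dhomogZ.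
  rewrite evalY1E mevalZ -evalY1E -scalerA {1}eF scalerDr scaler_sumr.
  by congr (_ + _); apply: eq_bigr => i _; rewrite scalerAr.
case: (boolP [exists i : 'I_s, (0 < m (lift ord_max i))%N]).
- case/existsP => i hi; set j := lift ord_max i.
  have le : (U_(j) <= m)%MM.
    by apply/mnm_lepP => k; rewrite mnm1E; case: eqP => // <-.
  have em : m = (m - U_(j) + U_(j))%MM by rewrite submK.
  have dm' : mdeg (m - U_(j))%MM = n.
    by move: dm; rewrite {1}em mdegD mdeg1 addn1 => -[].
  exists (fun k => if k == i then 'X_[m - U_(j)] else 0); split.
    by move=> k; case: eqP => _; [rewrite dhomogX /= dm' | exact: dhomog0].
  rewrite (bigD1 i) //= eqxx big1 ?addr0; last first.
    by move=> k /negbTE ->; rewrite mulr0.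
  have e0 : ev1 'X_[m] = 0.
    have := e1_X i; rewrite /Xv !evalY1E -/j => ex.
    by rewrite em mpolyXD mevalM ex mulr0.
  by rewrite e0 scale0r addr0 {1}em mpolyXD mulrC.
- rewrite negb_exists => /forallP h0.
  have h0' : forall i, m (lift ord_max i) = 0%N.
    by move=> i; move: (h0 i); rewrite lt0n negbK => /eqP.
  have em : m = (U_(ord_max) *+ n.+1)%MM.
    apply/mnmP => j; rewrite mulmnE mnm1E.
    case: (unliftP ord_max j) => [i ->|->].
      by rewrite h0' (negbTE (neq_lift _ _)).
    rewrite eqxx mul1n -dm mdegE sum_split big1 ?add0n //.
  exists (fun _ => 0); split=> [i|]; first exact: dhomog0.
  rewrite big1 ?add0r; last by move=> i _; rewrite mulr0.
  rewrite em -mpolyXn -/(Yv R s) evalY1E rmorphXn /= -evalY1E e1_Y expr1n scale1r //.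
Qed.


Definition HI n (a : R) := exists F : V, F \is n.-homog /\ ev F = a.
Definition JB n (a : R) :=
  exists b : 'I_s -> R, (forall i, HI n (b i)) /\ a = \sum_i x i * b i.

Lemma HI0 n : HI n 0.
Proof. by exists 0; rewrite dhomog0 /ev meval0. Qed.

Lemma HID n a b : HI n a -> HI n b -> HI n (a + b).
Proof. by move=> [F [hF <-]] [G [hG <-]]; exists (F + G); rewrite dhomogD // /ev mevalD. Qed.

Lemma HIZ n c a : HI n a -> HI n (c * a).
Proof. by move=> [F [hF <-]]; exists (c *: F); rewrite dhomogZ // /ev mevalZ. Qed.

Lemma HIN n a : HI n a -> HI n (- a).
Proof. by move=> h; rewrite -mulN1r; apply: HIZ. Qed.

Lemma HIB n a b : HI n a -> HI n b -> HI n (a - b).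
Proof. by move=> ha hb; apply: HID => //; apply: HIN. Qed.

Lemma HIM n m a b : HI n a -> HI m b -> HI (n + m) (a * b).
Proof. by move=> [F [hF <-]] [G [hG <-]]; exists (F * G); rewrite dhomogM // /ev mevalM. Qed.

Lemma HIM1 n a b : HI 1 a -> HI n b -> HI n.+1 (a * b).
Proof. by move=> ha hb; rewrite -add1n; apply: HIM. Qed.

Lemma HI_sum n (I0 : Type) (r : seq I0) (P : pred I0) (f : I0 -> R) :
  (forall i, P i -> HI n (f i)) -> HI n (\sum_(i <- r | P i) f i).
Proof. by move=> h; apply: big_ind => //; [exact: HI0 | exact: HID]. Qed.

Lemma HI_all a : HI 0 a.
Proof. by exists a%:MP; rewrite homog_C /ev mevalC. Qed.

Lemma HI_x i : HI 1 (x i).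
Proof. by exists (Xv R i); rewrite homog_X ev_X. Qed.

Lemma HI_y : HI 1 y.
Proof. by exists (Yv R s); rewrite homog_Y ev_Y. Qed.

Lemma HI_g j : HI 1 (g j).
Proof. by exists 'X_j; rewrite /ev mevalXU dhomogX /= mdeg1. Qed.

Lemma HI_yn n : HI n (y ^+ n).
Proof.
elim: n => [|n IH]; first exact: HI_all.
by rewrite exprS; apply: HIM1 => //; exact: HI_y.
Qed.

Lemma ev_decomp n (F : V) : F \is n.+1.-homog ->
  exists b : 'I_s -> R, (forall i, HI n (b i)) /\
    ev F = \sum_i x i * b i + ev1 F * y ^+ n.+1.
Proof.
move=> /homog_decomp [Fs [hFs eF]]; exists (fun i => ev (Fs i)); split.
  by move=> i; exists (Fs i).
rewrite {1}eF /ev mevalD mevalZ rmorph_sum rmorphXn /= -/(ev (Yv R s)) ev_Y.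
by congr (_ + _); apply: eq_bigr => i _; rewrite mevalM -/(ev (Xv R i)) ev_X.
Qed.

Lemma HI_down n a : HI n.+1 a -> HI n a.
Proof.
move=> [F [hF <-]]; have [b [hb ->]] := ev_decomp hF.
apply: HID; first by apply: HI_sum => i _; apply: HIZ.
by rewrite exprS mulrCA; apply: HIZ; apply: HIZ; exact: HI_yn.
Qed.

Lemma HI_le n m a : (n <= m)%N -> HI m a -> HI n a.
Proof.
move=> /subnK <-; elim: (m - n)%N => [|k IH] //= h.
by apply: IH; apply: HI_down; rewrite -addSn.
Qed.

Lemma JB0 n : JB n 0.
Proof. by exists (fun _ => 0); split=> [i|]; [exact: HI0 | rewrite big1 // => i; rewrite mulr0]. Qed.

Lemma JBD n a b : JB n a -> JB n b -> JB n (a + b).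
Proof.
move=> [u [hu ->]] [v [hv ->]]; exists (fun i => u i + v i); split.
  by move=> i; apply: HID.
by rewrite -big_split; apply: eq_bigr => i _; rewrite mulrDr.
Qed.

Lemma JBZ n c a : JB n a -> JB n (c * a).
Proof.
move=> [u [hu ->]]; exists (fun i => c * u i); split.
  by move=> i; apply: HIZ.
by rewrite mulr_sumr; apply: eq_bigr => i _; rewrite mulrCA.
Qed.

Lemma JBN n a : JB n a -> JB n (- a).
Proof. by move=> h; rewrite -mulN1r; apply: JBZ. Qed.

Lemma JBB n a b : JB n a -> JB n b -> JB n (a - b).
Proof. by move=> ha hb; apply: JBD => //; apply: JBN. Qed.

Lemma JB_sum n (I0 : Type) (r : seq I0) (P : pred I0) (f : I0 -> R) :
  (forall i, P i -> JB n (f i)) -> JB n (\sum_(i <- r | P i) f i).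
Proof. by move=> h; apply: big_ind => //; [exact: JB0 | exact: JBD]. Qed.

Lemma JB_x n i b : HI n b -> JB n (x i * b).
Proof.
move=> hb; exists (fun j => if j == i then b else 0); split.
  by move=> j; case: eqP => _ //; exact: HI0.
rewrite (bigD1 i) //= eqxx big1 ?addr0 // => j /negbTE ->; exact: mulr0.
Qed.

Lemma JBM n m a b : JB n a -> HI m b -> JB (n + m) (a * b).
Proof.
move=> [u [hu ->]] hb; rewrite mulr_suml; apply: JB_sum => i _.
by rewrite -mulrA; apply: JB_x; apply: HIM.
Qed.

Lemma JB_HI n a : JB n a -> HI n.+1 a.
Proof. by move=> [u [hu ->]]; apply: HI_sum => i _; apply: HIM1 => //; exact: HI_x. Qed.

Lemma ev_decompJ n (F : V) : F \is n.+1.-homog -> JB n (ev F - ev1 F * y ^+ n.+1).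
Proof.
move=> /ev_decomp [b [hb ->]]; rewrite addrK.
by apply: JB_sum => i _; apply: JB_x.
Qed.


Lemma phi_homog n (F : V) : F \is n.-homog -> phi x y F = (ev F)%:P * 'X^n.
Proof. exact: mmap_homog. Qed.

Definition psi (F : V) : {poly R} := mmap (@polyC R) (fun j => (e1 j)%:P * 'X) F.

Lemma psi_homog n (F : V) : F \is n.-homog -> psi F = (ev1 F)%:P * 'X^n.
Proof. exact: mmap_homog. Qed.

Lemma coefCXn (c : R) n : ((c%:P * 'X^n) : {poly R})`_n = c.
Proof. by rewrite coefCM coefXn eqxx mulr1. Qed.

Lemma inQnE n (F : V) : inQn x y n F <-> F \is n.-homog /\ ev F = 0.
Proof.
split=> -[hF e]; split=> //.
  move: e; rewrite /inQ (phi_homog hF) => e.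
  by have := congr1 (fun p : {poly R} => p`_n) e; rewrite /= coefCXn coef0.
by rewrite /inQ (phi_homog hF) e mul0r.
Qed.

Lemma phiM (F G : V) : phi x y (F * G) = phi x y F * phi x y G.
Proof. exact: rmorphM. Qed.

Lemma phiD (F G : V) : phi x y (F + G) = phi x y F + phi x y G.
Proof. exact: rmorphD. Qed.

Lemma psiM (F G : V) : psi (F * G) = psi F * psi G.
Proof. exact: rmorphM. Qed.

Lemma psi_sum (I0 : Type) (r : seq I0) (P : pred I0) (f : I0 -> V) :
  psi (\sum_(i <- r | P i) f i) = \sum_(i <- r | P i) psi (f i).
Proof. exact: rmorph_sum. Qed.

Lemma phi_sum (I0 : Type) (r : seq I0) (P : pred I0) (f : I0 -> V) :
  phi x y (\sum_(i <- r | P i) f i) = \sum_(i <- r | P i) phi x y (f i).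
Proof. exact: rmorph_sum. Qed.

Lemma inQD (F G : V) : inQ x y F -> inQ x y G -> inQ x y (F + G).
Proof. by rewrite /inQ phiD => -> ->; rewrite addr0. Qed.

Lemma inQM (H F : V) : inQ x y F -> inQ x y (H * F).
Proof. by rewrite /inQ phiM => ->; rewrite mulr0. Qed.

Lemma inQN (F : V) : inQ x y F -> inQ x y (- F).
Proof. by move=> h; rewrite -mulN1r; apply: inQM. Qed.

Lemma QG0 n : inQgen x y n 0.
Proof. by exists 0%N, (fun _ => 0), (fun _ => 0); split=> [[]|]; rewrite // big_ord0. Qed.

Lemma QGD n F G : inQgen x y n F -> inQgen x y n G -> inQgen x y n (F + G).
Proof.
move=> [k1 [G1 [H1 [h1 ->]]]] [k2 [G2 [H2 [h2 ->]]]].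
exists (k1 + k2)%N, (fun i => match split i with inl a => G1 a | inr b => G2 b end),
  (fun i => match split i with inl a => H1 a | inr b => H2 b end).
have sl : forall a, split (lshift k2 a) = inl a := fun a => unsplitK (inl a).
have sr : forall b, split (rshift k1 b) = inr b := fun b => unsplitK (inr b).
split.
  by move=> i; case: (split i).
by rewrite big_split_ord /=; congr (_ + _); apply: eq_bigr => i _; rewrite ?sl ?sr.
Qed.

Lemma QGM n H F : inQgen x y n F -> inQgen x y n (H * F).
Proof.
move=> [k [G [H1 [h ->]]]]; exists k, G, (fun i => H * H1 i); split=> //.
by rewrite mulr_sumr; apply: eq_bigr => i _; rewrite mulrA.
Qed.

Lemma QGN n F : inQgen x y n F -> inQgen x y n (- F).
Proof. by move=> h; rewrite -mulN1r; apply: QGM. Qed.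

Lemma QG_sum n (I0 : Type) (r : seq I0) (P : pred I0) (f : I0 -> V) :
  (forall i, P i -> inQgen x y n (f i)) -> inQgen x y n (\sum_(i <- r | P i) f i).
Proof. by move=> h; apply: big_ind => //; [exact: QG0 | exact: QGD]. Qed.

Lemma QG_Qn n d G : (d <= n)%N -> inQn x y d G -> inQgen x y n G.
Proof.
move=> hd hG; exists 1%N, (fun _ => G), (fun _ => 1); split.
  by move=> _; exists d.
by rewrite big_ord1 mul1r.
Qed.

Lemma QG_mono n m F : (n <= m)%N -> inQgen x y n F -> inQgen x y m F.
Proof.
move=> hnm [k [G [H [h ->]]]]; exists k, G, H; split=> // i.
by have [d [hd hG]] := h i; exists d; split=> //; apply: leq_trans hnm.
Qed.

Lemma QG_inQ n F : inQgen x y n F -> inQ x y F.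
Proof.
move=> [k [G [H [h ->]]]]; rewrite /inQ phi_sum big1 // => i _.
by rewrite phiM; have [d [_ [_ ->]]] := h i; rewrite mulr0.
Qed.

Lemma QG_of (n N : nat) : (forall d F, (d <= n)%N -> inQn x y d F -> inQgen x y N F) ->
  forall F, inQgen x y n F -> inQgen x y N F.
Proof.
move=> hQ F [k [G [H [h ->]]]]; apply: QG_sum => i _; apply: QGM.
by have [d [hd hG]] := h i; exact: hQ hG.
Qed.

Section WithI.
Variable I : R -> Prop.
Hypothesis Igen : same_set I (ideal_gen g).

Lemma I_HI a : I a <-> HI 1 a.
Proof.
split.
- move/Igen => [c [_ ->]]; apply: HI_sum => j _; apply: HIZ; exact: HI_g.
- move=> [F [hF <-]]; apply/Igen.
  have [b [hb ->]] := ev_decomp (n:=0) hF.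
  exists (fun j => if unlift ord_max j is Some i then b i else ev1 F); split=> [j|]; first by rewrite inE.
  rewrite sum_split unlift_none gens_max expr1; congr (_ + _).
  by apply: eq_bigr => i _; rewrite liftK gens_lift mulrC.
Qed.

Lemma I_g j : I (g j).
Proof. by apply/I_HI; exact: HI_g. Qed.

Lemma idealX_HI n a : idealX I n a <-> HI n a.
Proof.
elim: n a => [|n IH] a.
  by split=> // _; exact: HI_all.
split.
- move=> [k [u [v [hu [hv ->]]]]]; apply: HI_sum => i _.
  by apply: HIM1; [apply/I_HI; exact: hu | apply/IH; exact: hv].
- move=> [F [hF <-]]; have [b [hb ->]] := ev_decomp hF.
  exists s.+1, g, (fun j => if unlift ord_max j is Some i then b i else ev1 F * y ^+ n).
  split; first exact: I_g.
  split.
    move=> j; apply/IH; case: (unliftP ord_max j) => [i _|_] //.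
    by apply: HIZ; exact: HI_yn.
  rewrite sum_split unlift_none gens_max; congr (_ + _).
    by apply: eq_bigr => i _; rewrite liftK gens_lift.
  by rewrite exprS mulrCA.
Qed.

Lemma idealMJ n a : idealM (ideal_gen x) (idealX I n) a <-> JB n a.
Proof.
split.
- move=> [k [u [v [hu [hv ->]]]]]; apply: JB_sum => i _.
  have [c [_ ->]] := hu i; rewrite mulr_suml; apply: JB_sum => j _.
  rewrite [c j * x j]mulrC -mulrA; apply: JB_x; apply: HIZ; apply/idealX_HI; exact: hv.
- move=> [b [hb ->]]; exists s, x, b; split.
    move=> i; exists (fun j => (j == i)%:R); split=> [j|]; first by rewrite inE.
    by rewrite (bigD1 i) //= eqxx mul1r big1 ?addr0 // => j /negbTE ->; rewrite mul0r.
  by split=> // i; apply/idealX_HI.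
Qed.


Definition homG (c : R) (j : nat) : nat -> R := fun m => if m == j then c else 0.

Lemma idealX0 n : idealX I n 0.
Proof. by apply/idealX_HI; exact: HI0. Qed.

Lemma Gelt_hom c j : HI j c -> Gelt I (homG c j).
Proof.
move=> hc; split; last by exists j.+1 => m hm; rewrite /homG; case: eqP => // e; subst; rewrite ltnn in hm.
by move=> m; rewrite /homG; case: eqP => [->|_]; [apply/idealX_HI | exact: idealX0].
Qed.

Lemma GmulX (z : R) (h : nat -> R) m : Gmul (initial_form z) h m = if m is m'.+1 then z * h m' else 0.
Proof.
case: m => [|m]; rewrite /Gmul.
  by rewrite big_ord1 /initial_form /= mul0r.
rewrite (bigD1 (Ordinal (isT : (1 < m.+2)%N))) //= big1 ?addr0.
  by rewrite /initial_form /= subn1.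
move=> i hi; rewrite /initial_form; case: eqP => [e|]; last by rewrite mul0r.
by case/eqP: hi; apply: val_inj.
Qed.

Definition inJt t a := exists c : 'I_s -> R, a = \sum_(i < s | (i < t)%N) x i * c i.
Definition JBt t n a := exists b : 'I_s -> R, (forall i, HI n (b i)) /\
  a = \sum_(i < s | (i < t)%N) x i * b i.

Lemma sum_step (T : nmodType) t (ht : (t < s)%N) (f : 'I_s -> T) :
  \sum_(i < s | (i < t.+1)%N) f i = \sum_(i < s | (i < t)%N) f i + f (Ordinal ht).
Proof.
rewrite (bigD1 (Ordinal ht)) /= ?ltnSn // addrC; congr (_ + _); apply: eq_bigl => i.
by rewrite ltnS -val_eqE /= [RHS]ltn_neqAle andbC.
Qed.

Hypothesis hGreg : G_regular_seq I x s.-1.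

Lemma VV t : (t <= s.-1)%N -> forall n a, inJt t a -> HI n.+1 a -> JBt t n a.
Proof.
elim: t => [_|t IH ht] n a.
  move=> [c ->] _; exists (fun _ => 0); split=> [i|]; first exact: HI0.
  by rewrite !big_pred0 // => i; rewrite ltn0.
have hts : (t < s)%N by lia.
have hit : (t < s.-1)%N by lia.
have IH' := IH (ltnW ht).
set it := Ordinal hts.
move=> ha hna.
have S : forall j, (j <= n)%N -> exists c : 'I_s -> R,
    a = \sum_(i < s | (i < t.+1)%N) x i * c i /\ HI j (c it).
  elim=> [_|j IHj hj].
    by have [c ->] := ha; exists c; split => //; exact: HI_all.
  have [c [ea hc]] := IHj (ltnW hj).
  set a' := a - x it * c it.
  have ea' : a' = \sum_(i < s | (i < t)%N) x i * c i by rewrite /a' ea sum_step addrK.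
  have ha' : HI j.+1 a'.
    apply: HIB; first by apply: HI_le hna; lia.
    by apply: HIM1 => //; exact: HI_x.
  have [c' [hc' ec']] := IH' j a' (ex_intro _ c ea') ha'.
  have key : HI j.+2 (x it * c it + \sum_(i < s | (i < t)%N) x i * c' i).
    by rewrite -ec' /a' addrC subrK; apply: HI_le hna; lia.
  have Gin : G_in_ideal I x it (Gmul (initial_form (x it)) (homG (c it) j)).
    exists (fun i => homG (- c' i) j); split.
      by move=> i; apply: Gelt_hom; apply: HIN.
    move=> m; apply/idealX_HI; rewrite GmulX.
    under eq_bigr do rewrite GmulX.
    case: m => [|m].
      by rewrite big1 // subr0; exact: HI0.
    rewrite /homG; case: eqP => [->|_].
      under eq_bigr do rewrite mulrN.
      by rewrite sumrN opprK.
    by rewrite mulr0 big1 ?subr0; [exact: HI0 | move=> i _; rewrite mulr0].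
  have [e [he Ge]] := (proj1 hGreg) it hit (homG (c it) j) (Gelt_hom hc) Gin.
  set f := fun i => if j is j'.+1 then e i j' else 0.
  have E : \sum_(i < s | (i < it)%N) Gmul (initial_form (x i)) (e i) j =
      \sum_(i < s | (i < t)%N) x i * f i.
    by apply: eq_bigr => i _; rewrite GmulX /f; case: (j) => [|j']; rewrite ?mulr0.
  have Gj := Ge j; rewrite E /homG eqxx in Gj; move/idealX_HI: Gj => Gj.
  exists (fun i : 'I_s => if (i < t)%N then c' i + x it * f i
                   else if i == it then c it - \sum_(k < s | (k < t)%N) x k * f k else 0).
  split; last by rewrite /= ltnn eqxx.
  rewrite sum_step /= ltnn eqxx.
  rewrite (eq_bigr (fun i => x i * c' i + x it * (x i * f i))); last first.
    by move=> i ->; rewrite mulrDr mulrCA.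
  rewrite big_split /= -mulr_sumr -ec' /a' mulrBr.
  by rewrite -/it addrACA subrK subrr addr0.
have [c [ea hc]] := S n (leqnn n).
set a' := a - x it * c it.
have ea' : a' = \sum_(i < s | (i < t)%N) x i * c i by rewrite /a' ea sum_step addrK.
have ha' : HI n.+1 a' by apply: HIB => //; apply: HIM1 => //; exact: HI_x.
have [b [hb eb]] := IH' n a' (ex_intro _ c ea') ha'.
exists (fun i : 'I_s => if (i < t)%N then b i else if i == it then c it else 0); split.
  by move=> i; case: ifP => _ //; case: ifP => _ //; exact: HI0.
rewrite sum_step /= ltnn eqxx.
rewrite (eq_bigr (fun i => x i * b i)); last by move=> i ->.
by rewrite -eb /a' subrK.
Qed.

Lemma HI_choice n (b : 'I_s -> R) : (forall i, HI n (b i)) ->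
  exists B : 'I_s -> V, forall i, B i \is n.-homog /\ ev (B i) = b i.
Proof. by move=> h; apply: (@fin_all_exists _ (fun _ => V) (fun i F => F \is n.-homog /\ ev F = b i)) => i; exact: h. Qed.

Hypothesis hReg : regular_seq x.

Lemma KLt m t : (t <= s)%N -> forall Ks : 'I_s -> V, (forall i, Ks i \is m.+1.-homog) ->
  \sum_(i < s | (i < t)%N) x i * ev (Ks i) = 0 ->
  inQgen x y m.+1 (\sum_(i < s | (i < t)%N) Xv R i * Ks i).
Proof.
elim: t => [_|t IH ht] Ks hKs hsum.
  by rewrite big_pred0 //; exact: QG0.
have hts : (t < s)%N by lia.
set it := Ordinal hts.
set k := ev (Ks it).
move: hsum; rewrite sum_step -/it -/k => hsum.
have e : x it * k = - \sum_(i < s | (i < t)%N) x i * ev (Ks i).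
  by apply/eqP; rewrite -addr_eq0 addrC hsum.
have hk1 : ideal_gen_on [set j : 'I_s | (j < it)%N] x (k * x it).
  exists (fun i : 'I_s => if (i < t)%N then - ev (Ks i) else 0); split.
    by move=> i; rewrite inE /=; move/negbTE => ->.
  rewrite mulrC e -sumrN big_mkcond; apply: eq_bigr => i _.
  by case: ifP => _; [rewrite mulNr mulrC | rewrite mul0r].
have := (proj1 hReg) it k hk1; move=> [c [hc ek]].
have hJ : inJt t k.
  exists c; rewrite ek [RHS]big_mkcond; apply: eq_bigr => i _; case: ifP => h.
    by rewrite mulrC.
  by rewrite hc ?mul0r // inE /= h.
have hkH : HI m.+1 k by exists (Ks it).
have [b [hb eb]] := VV (t:=t) (ltac:(lia)) hJ hkH.
have [B hB] := HI_choice hb.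
set K' := Ks it - \sum_(j < s | (j < t)%N) Xv R j * B j.
have hK' : inQn x y m.+1 K'.
  apply/inQnE; split.
    have hS : \sum_(j < s | (j < t)%N) Xv R j * B j \is m.+1.-homog.
      apply: (big_ind (fun p : V => p \is m.+1.-homog)); first exact: dhomog0.
        by move=> ? ?; apply: dhomogD.
      by move=> j _; have := dhomogM (homog_X j) (proj1 (hB j)); rewrite add1n.
    by rewrite /K'; exact: (rpredB (hKs it) hS).
  rewrite /K' /ev mevalB rmorph_sum /= -/(ev (Ks it)) -/k eb; apply/eqP; rewrite subr_eq0; apply/eqP.
  by apply: eq_bigr => j _; rewrite mevalM -/(ev _) -/(ev _) ev_X; case: (hB j) => _ ->.
set Ks' := fun i => Ks i + Xv R it * B i.
have hKs' : forall i, Ks' i \is m.+1.-homog.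
  move=> i; apply: rpredD => //.
  by have := dhomogM (homog_X it) (proj1 (hB i)); rewrite add1n.
have hsum' : \sum_(i < s | (i < t)%N) x i * ev (Ks' i) = 0.
  rewrite -[RHS]hsum; under eq_bigr do rewrite /Ks' /ev mevalD mevalM -!/(ev _) ev_X mulrDr.
  rewrite big_split /= -/k eb mulr_sumr; congr (_ + _); apply: eq_bigr => i _.
  by case: (hB i) => _ ->; rewrite mulrCA.
have := IH (ltnW ht) Ks' hKs' hsum' => hIH.
rewrite sum_step -/it.
have -> : \sum_(i < s | (i < t)%N) Xv R i * Ks i + Xv R it * Ks it =
  \sum_(i < s | (i < t)%N) Xv R i * Ks' i + Xv R it * K'.
  rewrite /Ks' /K'; under [in RHS]eq_bigr do rewrite mulrDr.
  rewrite big_split /= mulrBr mulr_sumr -addrA; congr (_ + _).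
  rewrite (eq_bigr (fun i => Xv R it * (Xv R i * B i))); last by move=> i _; rewrite mulrCA.
  by rewrite addrC subrK.
apply: QGD => //; apply: QGM; exact: QG_Qn hK'.
Qed.


Lemma sum_all (T : nmodType) (f : 'I_s -> T) : \sum_i f i = \sum_(i < s | (i < s)%N) f i.
Proof. by apply: eq_bigl => i; rewrite ltn_ord. Qed.

Lemma KL m (K : V) : K \is m.+2.-homog -> ev1 K = 0 -> ev K = 0 -> inQgen x y m.+1 K.
Proof.
move=> hK h1 h0; have [Ks [hKs eK]] := homog_decomp hK.
rewrite h1 scale0r addr0 in eK.
rewrite eK sum_all; apply: KLt => //.
rewrite -sum_all; transitivity (ev K); last exact: h0.
rewrite eK /ev rmorph_sum; apply: eq_bigr => i _.
change (x i * ev (Ks i) = ev (Xv R i * Ks i)).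
by rewrite {2}/ev mevalM -/(ev (Xv R i)) -/(ev (Ks i)) ev_X.
Qed.

Lemma homog0_eval (G : V) v : G \is 0.-homog -> G.@[v] = G@_0.
Proof.
move=> hG; have -> : G = (G@_0)%:MP.
  apply/mpolyP => m; rewrite mcoeffC; case: eqP => [->|/eqP hm].
    by rewrite mulr1.
  rewrite mulr0; apply: (dhomog_nemf_coeff hG).
  by rewrite /= mdeg_eq0.
by rewrite mevalC mcoeffC eqxx mulr1.
Qed.

Lemma Qn_JB m d (G : V) : (d <= m.+1)%N -> inQn x y d G -> JB m (ev1 G * y ^+ m.+1).
Proof.
case: d => [|e] hd /inQnE [hG h0].
  have -> : ev1 G = 0 by rewrite evalY1E homog0_eval // -(homog0_eval g hG).
  by rewrite mul0r; exact: JB0.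
have := ev_decompJ hG; rewrite h0 sub0r => /JBN; rewrite opprK => hJ.
have := JBM hJ (HI_yn (m - e)); rewrite -mulrA -exprD.
by rewrite addSn subnKC.
Qed.

Lemma homog_sumXB k (B : 'I_s -> V) : (forall i, B i \is k.-homog) ->
  \sum_i Xv R i * B i \is k.+1.-homog.
Proof.
move=> hB; apply: (big_ind (fun p : V => p \is k.+1.-homog)); first exact: dhomog0.
  by move=> ? ?; apply: dhomogD.
by move=> j _; have := dhomogM (homog_X j) (hB j); rewrite add1n.
Qed.

Lemma lift_rel' k r : JB k (r * y ^+ k.+1) -> exists B : 'I_s -> V,
  (forall i, B i \is k.-homog) /\
  inQn x y k.+1 (r *: Yv R s ^+ k.+1 - \sum_i Xv R i * B i) /\
  ev1 (r *: Yv R s ^+ k.+1 - \sum_i Xv R i * B i) = r.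
Proof.
move=> [b [hb e]]; have [B hB] := HI_choice hb.
exists B; split; first by move=> i; case: (hB i).
split.
  apply/inQnE; split.
    apply: rpredB; last by apply: homog_sumXB => i; case: (hB i).
    by apply: dhomogZ; have := dhomogMn k.+1 homog_Y; rewrite mul1n.
  rewrite /ev mevalB mevalZ rmorphXn /= -/(ev (Yv R s)) ev_Y e rmorph_sum /=; apply/eqP; rewrite subr_eq0; apply/eqP.
  apply: eq_bigr => i _.
  by rewrite mevalM -/(ev (Xv R i)) -/(ev (B i)) ev_X; case: (hB i) => _ ->.
rewrite evalY1E mevalB mevalZ rmorphXn /= -evalY1E e1_Y expr1n mulr1 rmorph_sum /= big1 ?subr0 //.
by move=> i _; rewrite mevalM -evalY1E e1_X mul0r.
Qed.

Lemma lift_rel k r : JB k (r * y ^+ k.+1) -> exists F, inQn x y k.+1 F /\ ev1 F = r.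
Proof. by move=> /lift_rel' [B [_ [h1 h2]]]; exists (r *: Yv R s ^+ k.+1 - \sum_i Xv R i * B i). Qed.

Lemma P3 m (F : V) : inQn x y m.+2 F ->
  (JB m (ev1 F * y ^+ m.+1) <-> inQgen x y m.+1 F).
Proof.
move=> hF; split.
- move=> hJ; have [G [hG eG]] := lift_rel hJ.
  have [hFh hF0] := proj1 (inQnE _ _) hF.
  have [hGh hG0] := proj1 (inQnE _ _) hG.
  have -> : F = Yv R s * G + (F - Yv R s * G) by rewrite addrC subrK.
  apply: QGD; first by apply: QGM; exact: QG_Qn hG.
  apply: KL.
  - apply: rpredB => //; have := dhomogM homog_Y hGh; by rewrite add1n.
  - by rewrite evalY1E mevalB mevalM -!evalY1E e1_Y mul1r eG subrr.
  - by rewrite /ev mevalB mevalM -!/(ev _) hF0 hG0 mulr0 subrr.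
- move=> [k [G [H [h eF]]]].
  have [hFh _] := proj1 (inQnE _ _) hF.
  have e1F : ev1 F = (psi F)`_m.+2 by rewrite (psi_homog hFh) coefCXn.
  rewrite e1F eF psi_sum coef_sum mulr_suml; apply: JB_sum => i _.
  have [d [hd hGi]] := h i; have [hGh _] := proj1 (inQnE _ _) hGi.
  rewrite psiM (psi_homog hGh) mulrA coefMXn.
  have -> : (m.+2 < d)%N = false by apply/negbTE; rewrite -leqNgt; lia.
  rewrite coefMC -mulrA; apply: JBZ; exact: Qn_JB hd hGi.
Qed.

Lemma inQ_pihomog (F : V) d : inQ x y F -> inQn x y d (pihomog mdeg d F).
Proof.
move=> hF; apply/inQnE; split; first exact: pihomogP.
set k := maxn (mmeasure mdeg F) d.+1.
have hk : (mmeasure mdeg F <= k)%N by rewrite leq_maxl.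
have hd : (d < k)%N by rewrite leq_maxr.
have eF := pihomog_partitionE hk.
move: hF; rewrite /inQ {1}eF phi_sum => hF.
have := congr1 (fun p : {poly R} => p`_d) hF; rewrite /= coef0 coef_sum.
rewrite (bigD1 (Ordinal hd)) //= big1 ?addr0.
  by rewrite (phi_homog (pihomogP _ _ _)) coefCXn.
move=> e he; rewrite (phi_homog (pihomogP _ _ _)) coefCM coefXn.
have -> : (d == e) = false by apply/negbTE; apply: contra he => /eqP h; apply/eqP/val_inj.
by rewrite mulr0.
Qed.

Lemma y_notJ : (forall S : {set 'I_s.+1}, S \proper setT -> ~ same_set I (ideal_gen_on S g)) ->
  ~ JB 0 y.
Proof.
move=> hmin [b [_ eb]]; apply: (hmin [set j | j != ord_max]).
  rewrite properT; apply/eqP => e.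
  have : ord_max \in [set j : 'I_s.+1 | j != ord_max] by rewrite e inE.
  by rewrite inE eqxx.
move=> a; split.
- move/Igen => [c [_ ->]].
  exists (fun j => if unlift ord_max j is Some i then c (lift ord_max i) + c ord_max * b i else 0).
  split.
    by move=> j; rewrite inE negbK => /eqP ->; rewrite unlift_none.
  rewrite !sum_split unlift_none mul0r addr0 gens_max.
  rewrite (eq_bigr (fun i => c (lift ord_max i) * x i)); last by move=> i _; rewrite gens_lift.
  rewrite [RHS](eq_bigr (fun i => (c (lift ord_max i) + c ord_max * b i) * x i)); last first.
    by move=> i _; rewrite liftK gens_lift.
  rewrite eb mulr_sumr -big_split /=; apply: eq_bigr => i _; rewrite mulrDl; congr (_ + _).
  by rewrite mulrCA mulrC.
- move=> [c [hc ea]]; apply/Igen; exists c; split=> // j.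
  by rewrite inE.
Qed.

Lemma JB_of_y k : JB k (y ^+ k.+1) -> forall a, HI k.+1 a -> JB k a.
Proof.
move=> hy a [F [hF <-]]; have [b [hb ->]] := ev_decomp hF.
apply: JBD; first by apply: JB_sum => i _; apply: JB_x.
by apply: JBZ.
Qed.

Lemma JB_y_up k : JB k (y ^+ k.+1) -> JB k.+1 (y ^+ k.+2).
Proof. by move=> h; have := JBM h HI_y; rewrite addn1 -exprSr. Qed.

Lemma QnQG r : JB r (y ^+ r.+1) -> forall d F, inQn x y d F -> inQgen x y r.+1 F.
Proof.
move=> hy d; elim: d {-2}d (leqnn d) => [|d IH] d' hd' F hF.
  by apply: (QG_Qn _ hF); lia.
case: (leqP d' r.+1) => hdr; first exact: QG_Qn hF.
have [k ek] : exists k, d' = k.+2 by exists d'.-2; lia.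
subst d'.
have hk : (r <= k)%N by lia.
have hyk : JB k (y ^+ k.+1).
  move: hk; rewrite leq_eqVlt => /orP [/eqP <- //|].
  elim: k {IH hd' F hF hdr} => [//|k IHk]; rewrite ltnS leq_eqVlt => /orP [/eqP <-|h].
    exact: JB_y_up.
  exact: JB_y_up (IHk h).
have hQ := proj1 (P3 hF) (JBZ _ (JB_of_y hyk (HI_yn _))).
apply: (QG_of _ hQ) => e G he hG; apply: IH hG; lia.
Qed.
End WithI.
End Main.

Theorem theorem4p1 (R : comNzRingType) (s : nat) (x : 'I_s -> R) (y : R)
  (I : R -> Prop) :
  noetherian R -> local_ring R ->
  minimal_generating (gens x y) I ->
  regular_seq x ->
  G_regular_seq I x s.-1 ->
  let J := ideal_gen x in
  (forall n : nat, (2 <= n)%N ->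
     (* F |-> F(0,...,0,1) maps Q_n into (J I^(n-1) : y^n) *)
     (forall F : {mpoly R[s.+1]}, inQn x y n F ->
        colon (idealM J (idealX I n.-1)) (y ^+ n) (evalY1 F)) /\
     (* the induced map [Q/Q<n-1>]_n -> (J I^(n-1) : y^n)/(J I^(n-2) : y^(n-1))
        is surjective ... *)
     (forall r : R, colon (idealM J (idealX I n.-1)) (y ^+ n) r ->
        exists F : {mpoly R[s.+1]}, inQn x y n F /\
          colon (idealM J (idealX I n.-2)) (y ^+ n.-1) (evalY1 F - r)) /\
     (* ... and its kernel is exactly Q<n-1> in degree n (hence an isomorphism) *)
     (forall F : {mpoly R[s.+1]}, inQn x y n F ->
        (colon (idealM J (idealX I n.-2)) (y ^+ n.-1) (evalY1 F) <->
         inQgen x y n.-1 F))) /\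
  (forall r : nat, reduction_number J I r ->
     relation_type x y r.+1 /\
     exists Fs : 'I_s -> {mpoly R[s.+1]},
       (forall i, Fs i \is r.-homog) /\
       let P := Yv R s ^+ r.+1 - \sum_(i < s) Xv R i * Fs i in
       inQn x y r.+1 P /\
       forall G : {mpoly R[s.+1]},
         inQ x y G <-> exists A B : {mpoly R[s.+1]}, inQgen x y r B /\ G = A * P + B).
Proof.
move=> _ _ hmin hReg hGreg J.
have Igen := proj1 hmin.
split.
  move=> n hn; case: n hn => [|[|m]] // _.
  split; [|split].
  - move=> F hF; rewrite /colon /J; apply/(idealMJ Igen).
    exact: (Qn_JB (m:=m.+1) (leqnn _) hF).
  - move=> r; rewrite /colon /J => /(idealMJ Igen) h.
    have [B [_ [hF e]]] := lift_rel' h.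
    eexists; split; first exact: hF.
    apply/(idealMJ Igen); rewrite e subrr mul0r; exact: JB0.
  - move=> F hF; rewrite /colon /J; split.
      by move/(idealMJ Igen) => h; exact/(P3 Igen hGreg hReg hF).
    by move=> h; apply/(idealMJ Igen); exact/(P3 Igen hGreg hReg hF).
move=> r [hJI [hred hminr]].
have hyJ : JB x y r (y ^+ r.+1).
  apply/(idealMJ Igen)/(proj1 (hred _))/(idealX_HI Igen); exact: HI_yn.
have [r' er] : exists r', r = r'.+1.
  case: r hred hminr hyJ => [|r'] hred hminr hyJ; last by exists r'.
  exfalso; apply: (y_notJ Igen (proj2 hmin)).
  apply/(idealMJ Igen)/(proj1 (hred y))/(idealX_HI Igen); exact: HI_y.
subst r.
have hnot : ~ JB x y r' (y ^+ r'.+1).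
  move=> h; apply: (hminr r' (ltnSn _)) => a; split.
    by move/(idealX_HI Igen) => ha; apply/(idealMJ Igen); exact: JB_of_y h a ha.
  by move/(idealMJ Igen) => ha; apply/(idealX_HI Igen); exact: JB_HI.
have hQG := QnQG Igen hGreg hReg hyJ.
have hQeq : Q_eq_gen x y r'.+2.
  move=> F; split; last exact: QG_inQ.
  move=> hF; rewrite (pihomog_partitionE (leqnn (mmeasure mdeg F))).
  by apply: QG_sum => d _; exact: hQG (inQ_pihomog d hF).
have h1y : JB x y r'.+1 (1 * y ^+ r'.+2) by rewrite mul1r.
have [B [hB [hP e1P]]] := lift_rel' h1y.
rewrite scale1r in hP e1P.
split.
  split=> //; split=> // M /andP [hM1 hMr] hM.
  apply: hnot.
  have hPM := proj1 (hM _) (proj2 hP).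
  have hPr : inQgen x y r'.+1 (Yv R s ^+ r'.+2 - \sum_i Xv R i * B i) := QG_mono (hMr : (M <= r'.+1)%N) hPM.
  by have := proj2 (P3 Igen hGreg hReg hP) hPr; rewrite e1P mul1r.
exists B; split; first exact: hB.
move=> P; change (inQn x y r'.+2 P) in hP; change (evalY1 P = 1) in e1P.
split; first exact: hP.
move=> G; split; last first.
  move=> [A [B0 [hB0 ->]]]; apply: inQD; [apply: inQM; exact: proj2 hP | exact: QG_inQ hB0].
move=> /(proj1 (hQeq G)) [k [Gs [H [h ->]]]].
pose T (G0 : {mpoly R[s.+1]}) := exists A B0 : {mpoly R[s.+1]}, inQgen x y r'.+1 B0 /\ G0 = A * P + B0.
suff : T (\sum_(i < k) H i * Gs i) by [].
apply: big_ind.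
- by exists 0, 0; split; [exact: QG0 | rewrite mul0r addr0].
- move=> G1 G2 [A1 [B1 [h1 ->]]] [A2 [B2 [h2 ->]]].
  exists (A1 + A2), (B1 + B2); split; first exact: QGD.
  by rewrite mulrDl addrACA.
move=> i _; have [d [hd hGi]] := h i.
suff [A [B0 [hB0 eG]]] : T (Gs i).
  exists (H i * A), (H i * B0); split; first exact: QGM.
  by rewrite eG mulrDr mulrA.
case: (leqP d r'.+1) => hdr.
  by exists 0, (Gs i); split; [exact: QG_Qn hGi | rewrite mul0r add0r].
have ed : d = r'.+2 by lia.
subst d.
set c := evalY1 (Gs i).
exists c%:MP, (Gs i - c%:MP * P); split; last by rewrite addrC subrK.
have [hGh hG0] := proj1 (inQnE _ _ _ _) hGi.
have [hPh hP0] := proj1 (inQnE _ _ _ _) hP.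
have hB0 : inQn x y r'.+2 (Gs i - c%:MP * P).
  apply/inQnE; split.
    by apply: rpredB => //; rewrite mul_mpolyC; apply: dhomogZ.
  by rewrite /ev mevalB mevalM -!/(ev _ _ _) hG0 hP0 mulr0 subrr.
apply/(P3 Igen hGreg hReg hB0).
have -> : evalY1 (Gs i - c%:MP * P) = 0.
  by rewrite evalY1E mevalB mevalM mevalC -!evalY1E e1P mulr1 subrr.
by rewrite mul0r; exact: JB0.
Qed.
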